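(* Let $k\ge 1$ and $\ell$ be integers with $0\le \ell\le 2k-1$. Let $G=(V,E)$ be a multigraph (loops allowed) on $n$ vertices with $kn-\ell$ edges. The following statements are equivalent: (1) $G$ is $(k,0)$-sparse; (2) there is some set of $\ell$ edges which, when added to $G$, results in a $k$-map.
   Context: Graphs are multigraphs, possibly with loops. A graph is $(k,\ell)$-sparse if no subset $V'$ of $n'$ vertices spans more than $kn'-\ell$ edges (edges with both endpoints in $V'$). A map is a graph admitting an orientation of its edges such that every vertex has out-degree exactly $1$ (a loop contributes out-degree $1$ to its vertex). A $k$-map is a graph whose edge set can be partitioned into $k$ edge-disjoint maps on the same vertex set. *)

(* Defs.v *)
From mathcomp Require Import all_boot all_order all_algebra.
Set Implicit Arguments. Unset Strict Implicit. Unset Printing Implicit Defensive.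

(* A multigraph (loops allowed) on a finite vertex type V is given by a
   finite edge type E together with an endpoint map ends : E -> V * V.
   A loop is an edge e with (ends e).1 = (ends e).2. *)

Definition spanned (V E : finType) (ends : E -> V * V) (A : {set V}) : {set E} :=
  [set e | ((ends e).1 \in A) && ((ends e).2 \in A)].

Definition sparse (k l : nat) (V E : finType) (ends : E -> V * V) : Prop :=
  forall A : {set V},
    (#|spanned ends A|%:Z <= (k * #|A|)%:Z - l%:Z)%R.

Definition tail (V E : finType) (ends : E -> V * V) (o : E -> bool) (e : E) : V :=
  if o e then (ends e).1 else (ends e).2.

(* the subgraph with edge set S (on all of V) is a map: some orientation
   gives every vertex out-degree exactly 1 (a loop counts once) *)
Definition is_map_on (V E : finType) (ends : E -> V * V) (S : {set E}) : Prop :=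
  exists o : E -> bool,
    forall v : V, #|[set e in S | tail ends o e == v]| = 1%N.

Definition is_kmap (k : nat) (V E : finType) (ends : E -> V * V) : Prop :=
  exists c : E -> 'I_k, forall i : 'I_k, is_map_on ends [set e | c e == i].

Definition add_edges (V E : finType) (l : nat) (ends : E -> V * V)
  (add : 'I_l -> V * V) : (E + 'I_l)%type -> V * V :=
  fun x => match x with inl e => ends e | inr j => add j end.

(* Main.v *)
Require Import Defs.
From mathcomp Require Import all_boot all_order all_algebra.
From mathcomp Require Import zify.
Set Implicit Arguments. Unset Strict Implicit. Unset Printing Implicit Defensive.

Section Hak.
Variables (V E : finType) (ends : E -> V * V).

Local Notation sp A T := #|spanned ends A :&: T|.

Lemma sp_super (A B : {set V}) (T : {set E}) :
  (sp A T + sp B T <= sp (A :|: B) T + sp (A :&: B) T)%N.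
Proof.
rewrite -cardsUI.
have -> : (spanned ends A :&: T) :&: (spanned ends B :&: T) = spanned ends (A :&: B) :&: T.
  by apply/setP=> x; rewrite !inE; do ! case: (_ \in _).
rewrite leq_add2r; apply: subset_leq_card; apply/subsetP=> x; rewrite !inE.
by do ! case: (_ \in _).
Qed.

Lemma sum_mod (c : V -> nat) (A B : {set V}) :
  (\sum_(v in A :|: B) c v + \sum_(v in A :&: B) c v = \sum_(v in A) c v + \sum_(v in B) c v)%N.
Proof.
rewrite !(big_mkcond (fun v => v \in _)) -!big_split /=; apply: eq_bigr => v _.
rewrite !inE. case: (v \in A); case: (v \in B) => /=; lia.
Qed.

Lemma sp_sub (A : {set V}) (S T : {set E}) : S \subset T -> (sp A S <= sp A T)%N.
Proof. by move=> h; apply: subset_leq_card; apply: setIS. Qed.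

Lemma hak_step (S : {set E}) (c : V -> nat) (e : E) (b : bool) :
  e \in S ->
  (forall c' : V -> nat, (forall A, sp A (S :\ e) <= \sum_(v in A) c' v)%N ->
     exists o : E -> bool, forall v, #|[set x in S :\ e | tail ends o x == v]| <= c' v)%N ->
  (forall A, sp A S <= \sum_(v in A) c v)%N ->
  (forall A : {set V}, tail ends (fun _ => b) e \in A -> sp A (S :\ e) < \sum_(v in A) c v)%N ->
  exists o : E -> bool, forall v, (#|[set x in S | tail ends o x == v]| <= c v)%N.
Proof.
move=> eS IH hS good; set u := tail ends (fun _ => b) e.
have cu : (0 < c u)%N.
  have := good [set u]; rewrite inE eqxx big_set1 => /(_ isT); lia.
pose c' v := if v == u then (c v).-1 else c v.
have [|o ho] := IH c'.
  move=> A; case uA: (u \in A).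
    rewrite (bigD1 u) //= /c' eqxx.
    rewrite (eq_bigr c); last by move=> v /andP[_ /negbTE ->].
    have := good A uA; rewrite (bigD1 u) //=; lia.
  rewrite (eq_bigr c); last by move=> v vA; rewrite /c'; case: eqP => // ev; by rewrite ev uA in vA.
  by apply: leq_trans (hS A); apply: sp_sub; apply: subD1set.
exists (fun x => if x == e then b else o x) => v.
have tl : forall x, x != e -> tail ends (fun x => if x == e then b else o x) x = tail ends o x.
  by move=> x /negbTE xe; rewrite /tail xe.
case: (eqVneq v u) => [->|vu].
  apply: (@leq_trans (1 + #|[set x in S :\ e | tail ends o x == u]|)).
    rewrite -(cards1 e); apply: leq_trans (leq_card_setU _ _); apply: subset_leq_card.
    apply/subsetP=> x; rewrite !inE; case: (eqVneq x e) => [->|xe] //=.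
    by rewrite tl.
  by have := ho u; rewrite /c' eqxx; lia.
have hv := ho v; have e1 : c' v = c v by rewrite /c'; case: ifP => // /eqP evu; rewrite evu eqxx in vu.
rewrite e1 in hv; apply: leq_trans hv.
apply: subset_leq_card; apply/subsetP=> x; rewrite !inE; case: (eqVneq x e) => [->|xe] /=.
  have hu : (if b then (ends e).1 else (ends e).2) = u by [].
  rewrite /tail eqxx hu eq_sym (negbTE vu) andbF => //.
by rewrite tl.
Qed.

Lemma hakimi (n : nat) : forall (S : {set E}) (c : V -> nat), #|S| = n ->
  (forall A, sp A S <= \sum_(v in A) c v)%N ->
  exists o : E -> bool, forall v, (#|[set x in S | tail ends o x == v]| <= c v)%N.
Proof.
elim: n => [|n IHn] S c cS hS.
  move/eqP: cS; rewrite cards_eq0 => /eqP ->; exists (fun _ => true) => v.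
  rewrite (_ : [set x in set0 | _] = set0) ?cards0 //; apply/setP=> x; by rewrite in_set in_set0.
have /set0Pn [e eS] : S != set0 by rewrite -card_gt0 cS.
have IH : forall c' : V -> nat, (forall A, sp A (S :\ e) <= \sum_(v in A) c' v)%N ->
     exists o : E -> bool, forall v, (#|[set x in S :\ e | tail ends o x == v]| <= c' v)%N.
  by move=> c'; apply: IHn; rewrite (cardsD1 e S) eS in cS; case: cS.
case g1: [forall A : {set V}, (tail ends (fun _ => true) e \in A) ==> (sp A (S :\ e) < \sum_(v in A) c v)%N].
  apply: (@hak_step S c e true eS IH hS) => A uA; by move/forallP: g1 => /(_ A); rewrite uA.
case g2: [forall A : {set V}, (tail ends (fun _ => false) e \in A) ==> (sp A (S :\ e) < \sum_(v in A) c v)%N].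
  apply: (@hak_step S c e false eS IH hS) => A uA; by move/forallP: g2 => /(_ A); rewrite uA.
exfalso.
move/negbT: g1; rewrite negb_forall => /existsP [A]; rewrite negb_imply -leqNgt => /andP [uA hA].
move/negbT: g2; rewrite negb_forall => /existsP [B]; rewrite negb_imply -leqNgt => /andP [wB hB].
have h1 := sp_super A B (S :\ e).
have h2 := sum_mod c A B.
have h3 : (sp (A :&: B) (S :\ e) <= \sum_(v in A :&: B) c v)%N.
  by apply: leq_trans (hS _); apply: sp_sub; apply: subD1set.
have h4 : sp (A :|: B) S = (sp (A :|: B) (S :\ e)).+1.
  have -> : spanned ends (A :|: B) :&: S = e |: (spanned ends (A :|: B) :&: (S :\ e)).
    apply/setP=> x; rewrite !inE; case: (eqVneq x e) => [->|] //=.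
    rewrite eS andbT; move: uA wB; rewrite /tail /= => -> ->; by rewrite orbT.
  by rewrite cardsU1 !inE eqxx /= andbF.
have := hS (A :|: B); rewrite h4; lia.
Qed.
End Hak.
Lemma kmap_sparse (k : nat) (V E X : finType) (ends : E -> V * V) (ends' : X -> V * V)
  (f : E -> X) : injective f -> (forall e, ends' (f e) = ends e) ->
  is_kmap k ends' -> forall A : {set V}, (#|spanned ends A| <= k * #|A|)%N.
Proof.
move=> finj hf [c hc] A.
rewrite -sum1_card (partition_big (fun e => c (f e)) xpredT) //=.
apply: (@leq_trans (\sum_(i < k) #|A|)); last by rewrite sum_nat_const card_ord mulnC.
apply: leq_sum => i _.
rewrite sum1dep_card.
have [o ho] := hc i.
pose g e := tail ends' o (f e).
rewrite -(@card_in_imset _ _ g).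
  apply: subset_leq_card; apply/subsetP=> v /imsetP [e]; rewrite !inE => /andP [/andP [h1 h2] _] ->.
  by rewrite /g /tail hf; case: (o (f e)).
move=> x y; rewrite !inE => /andP [_ cx] /andP [_ cy] gxy.
have /eqP /cards1P [w hw] := ho (g x).
apply: finj.
have : f x \in [set e in [set e | c e == i] | tail ends' o e == g x] by rewrite !inE cx eqxx.
have : f y \in [set e in [set e | c e == i] | tail ends' o e == g x] by rewrite !inE cy gxy eqxx.
by rewrite hw !inE => /eqP -> /eqP ->.
Qed.
Lemma outdeg_kmap (k : nat) (V X : finType) (ends : X -> V * V) (o : X -> bool) :
  (forall v, #|[set x | tail ends o x == v]| = k) -> is_kmap k ends.
Proof.
move=> hd.
pose L v := enum [set x | tail ends o x == v].
have sL : forall v, size (L v) = k by move=> v; rewrite /L -cardE hd.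
have mL : forall x, x \in L (tail ends o x) by move=> x; rewrite /L mem_enum inE.
have H : forall x, (index x (L (tail ends o x)) < k)%N.
  by move=> x; rewrite -(sL (tail ends o x)) index_mem.
exists (fun x => Ordinal (H x)) => i; exists o => v.
have : (i < size (L v))%N by rewrite sL.
case Lv: (L v) => [|w0 s] //= _.
apply/eqP/cards1P; exists (nth w0 (L v) i); apply/setP=> x; rewrite !inE.
apply/idP/idP.
  move=> /andP [/eqP ci /eqP tv]; apply/eqP.
  have <- : index x (L v) = i by move: ci => /(congr1 val) /=; rewrite tv.
  by rewrite nth_index // -tv.
move=> /eqP ->.
have ui : (i < size (L v))%N by rewrite sL.
have tv : tail ends o (nth w0 (L v) i) = v.
  by move: (mem_nth w0 ui); rewrite /L mem_enum inE => /eqP.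
apply/andP; split; last by rewrite tv.
apply/eqP/val_inj => /=; rewrite tv index_uniq //.
by rewrite /L enum_uniq.
Qed.

Lemma sparse_nat (k : nat) (V E : finType) (ends : E -> V * V) :
  sparse k 0 ends <-> forall A, (#|spanned ends A| <= k * #|A|)%N.
Proof.
rewrite /sparse; split=> h A; have := h A.
  by rewrite GRing.subr0 lez_nat.
by move=> hA; rewrite GRing.subr0 lez_nat.
Qed.

Theorem theorem2 (k l : nat) (V E : finType) (ends : E -> V * V) :
  (1 <= k)%N -> (l <= 2 * k - 1)%N ->
  (#|E| + l = k * #|V|)%N ->
  (sparse k 0 ends <->
   exists add : 'I_l -> V * V, is_kmap k (add_edges ends add)).
Proof.
move=> _ _ hcard; rewrite sparse_nat; split; last first.
  move=> [add hk]; apply: (kmap_sparse (f := inl) _ _ hk) => //.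
  by move=> x y [].
move=> hsp.
have [o ho] : exists o : E -> bool, forall v,
    (#|[set x in [set: E] | tail ends o x == v]| <= (fun _ => k) v)%N.
  apply: (@hakimi V E ends #|[set: E]| _ _ erefl) => A.
  by rewrite setIT sum_nat_const mulnC.
pose d v := #|[set x in [set: E] | tail ends o x == v]|.
have hE : #|E| = (\sum_v d v)%N.
  rewrite -sum1_card (partition_big (tail ends o) xpredT) //=; apply: eq_bigr => v _.
  by rewrite sum1dep_card /d; apply: eq_card => x; rewrite !inE.
pose s := flatten [seq nseq (k - d v) v | v <- enum V].
have hsum : (\sum_v (k - d v) + \sum_v d v = #|V| * k)%N.
  rewrite -big_split /= -sum_nat_const; apply: eq_bigr => v _; rewrite subnK //; exact: ho.
have hs : size s = l.
  rewrite size_flatten /shape -map_comp sumnE big_map big_enum /= (eq_bigr (fun i => k - d i)%N); last by move=> i _; rewrite size_nseq.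
  have : (\sum_(i in V) (k - d i) = \sum_v (k - d v))%N by apply: eq_bigl => v; rewrite inE.
  move=> ->; lia.
have hcnt : forall v, count (pred1 v) s = (k - d v)%N.
  move=> v; rewrite count_flatten -map_comp sumnE big_map big_enum /=.
  rewrite (eq_bigr (fun w => (w == v) * (k - d w))%N); last by move=> w _; rewrite count_nseq.
  rewrite (bigD1 v) ?inE //= eqxx mul1n big1 ?addn0 // => w /negbTE ->.
  by rewrite mul0n.
case: (pickP (fun _ : V => true)) => [v0 _ | hV]; last first.
  have V0 : #|V| = 0%N by apply: eq_card0 => v; by have := hV v.
  have l0 : l = 0%N by lia.
  clear hs; subst l.
  exists (fun j : 'I_0 => False_rect _ (notF (ltn_ord j))).
  apply: (@outdeg_kmap k V _ _ (fun _ => true)) => v; by have := hV v.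
pose add (j : 'I_l) := (nth v0 s j, nth v0 s j).
exists add.
pose o' (x : (E + 'I_l)%type) := match x with inl e => o e | inr _ => true end.
apply: (outdeg_kmap (o := o')) => v.
rewrite -sum1dep_card big_sumType /=.
rewrite sum1dep_card.
have -> : #|[set x | tail (add_edges ends add) o' (inl x) == v]| = d v.
  by apply: eq_card => x; rewrite !inE.
rewrite (eq_bigl (fun j : 'I_l => nth v0 s j == v)); last by move=> j.
rewrite -(big_mkord (fun j => nth v0 s j == v) (fun _ => 1%N)) -hs -(big_nth v0 (fun w => w == v) (fun _ => 1%N)).
rewrite sum1_count hcnt subnKC //; exact: ho.
Qed.
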